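(* Let $n\ge d\ge 1$. For $k=1,\dots,n$ let $\tilde Q_k=\begin{pmatrix}\mu_k&y_k^*\\ x_k&\tilde O_k\end{pmatrix}$ be a real orthogonal $(d+1)\times(d+1)$ matrix ($\mu_k\in\mathbb{R}$, $x_k,y_k\in\mathbb{R}^d$, $\tilde O_k\in\mathbb{R}^{d\times d}$), and let $$Q^{(k)}=\mathbb{I}_{k-1}\oplus\begin{pmatrix}\mu_k&0_{1,n-k}&y_k^*\\ 0_{n-k,1}&\mathbb{I}_{n-k}&0_{n-k,d}\\ x_k&0_{d,n-k}&\tilde O_k\end{pmatrix}\in\mathbb{R}^{(n+d)\times(n+d)}.$$ Define the $d\times n$ matrix $C$ and the $n\times n$ matrix $A$ by $$\begin{pmatrix} C\\ A\end{pmatrix}=Q^{(n)}Q^{(n-1)}\cdots Q^{(1)}\begin{pmatrix}\mathbb{I}_n\\ 0_{d,n}\end{pmatrix}.$$ Then $(A,C)$ is an OTSON pair.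
   Context: ${}^*$ denotes transpose. $(A,C)$ is OTSON if $A^*A=\mathbb{I}_n-C^*C$ and the stack $Q=\begin{pmatrix} C\\ A\end{pmatrix}$ satisfies $Q_{i,j}=0$ for $j>i$. *)

(* Defs.v *)
From mathcomp Require Import all_boot all_order all_algebra.
Unset Printing Implicit Defensive.
Import Order.TTheory GRing.Theory Num.Theory.
Local Open Scope ring_scope.

Definition orthogonal_mx {R : realFieldType} {m : nat} (Q : 'M[R]_m) : Prop :=
  Q^T *m Q = 1%:M.

Definition OTSON {R : realFieldType} {n d : nat} (A : 'M[R]_n) (C : 'M[R]_(d, n))
  : Prop :=
  A^T *m A = 1%:M - C^T *m C /\
  forall (i : 'I_(d + n)) (j : 'I_n), (i < j)%N -> (col_mx C A) i j = 0.

(* Position, inside the (d+1)x(d+1) matrix Qt_k, of the global index i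
   (0-based, 0 <= i < n+d) for the k-th factor (k0 = k-1 is 0-based):
   index k0 corresponds to the mu_k entry (position 0), indices n..n+d-1
   correspond to positions 1..d; all other indices are in identity blocks. *)
Definition Qpos (n d k0 i : nat) : option 'I_(1 + d) :=
  if i == k0 then Some (inord 0)
  else if (n <= i)%N then Some (inord (i - n).+1) else None.

(* Q^{(k)} = I_{k-1} (+) [[mu_k, 0, y_k^*], [0, I_{n-k}, 0], [x_k, 0, O_k]],
   written entrywise; k0 = k-1. *)
Definition Qbig {R : realFieldType} (n d k0 : nat) (Qt : 'M[R]_(1 + d))
  : 'M[R]_(n + d) :=
  \matrix_(i, j)
    match Qpos n d k0 i, Qpos n d k0 j with
    | Some a, Some b => Qt a b
    | None, None => (i == j)%:R
    | _, _ => 0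
    end.

(* Q^{(n)} ... Q^{(1)} [I_n ; 0_{d,n}], where Qt k0 is the factor for k = k0+1 *)
Definition stackQ {R : realFieldType} (n d : nat) (Qt : nat -> 'M[R]_(1 + d))
  : 'M[R]_(n + d, n) :=
  foldl (fun M k0 => Qbig n d k0 (Qt k0) *m M) (col_mx 1%:M 0) (iota 0 n).

Definition stackQ' {R : realFieldType} (n d : nat) (Qt : nat -> 'M[R]_(1 + d))
  : 'M[R]_(d + n, n) := castmx (addnC n d, erefl n) (stackQ n d Qt).

Definition Cmat {R : realFieldType} (n d : nat) (Qt : nat -> 'M[R]_(1 + d))
  : 'M[R]_(d, n) := usubmx (stackQ' n d Qt).
Definition Amat {R : realFieldType} (n d : nat) (Qt : nat -> 'M[R]_(1 + d))
  : 'M[R]_n := dsubmx (stackQ' n d Qt).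

(* Main.v *)
Require Import Defs.
From mathcomp Require Import all_boot all_order all_algebra.
Import Order.TTheory GRing.Theory Num.Theory.
Local Open Scope ring_scope.

Section Gen.
Variable R : realFieldType.

Lemma sum_opt N m (f : 'I_N -> option 'I_m) (g : 'I_m -> 'I_N)
  (hfg : forall c, f (g c) = Some c) (hgf : forall l c, f l = Some c -> l = g c)
  (G : 'I_m -> R) :
  \sum_l (match f l with Some c => G c | None => 0 end) = \sum_c G c.
Proof.
transitivity (\sum_l \sum_c ((f l == Some c)%:R * G c)).
  apply: eq_bigr => l _; case E: (f l) => [c|].
    rewrite (bigD1 c) //= eqxx mul1r big1 ?addr0 // => c' hc'.
    by rewrite eq_sym (inj_eq (@Some_inj _)) (negbTE hc') mul0r.
  by rewrite big1 // => c _; rewrite mul0r.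
rewrite exchange_big; apply: eq_bigr => c _.
rewrite (bigD1 (g c)) //= hfg eqxx mul1r big1 ?addr0 // => l hl.
case: eqP => [/hgf E|]; last by rewrite mul0r.
by rewrite E eqxx in hl.
Qed.

Lemma orth_gen N m (f : 'I_N -> option 'I_m) (g : 'I_m -> 'I_N)
  (hfg : forall c, f (g c) = Some c) (hgf : forall l c, f l = Some c -> l = g c)
  (Q : 'M[R]_m) : Q^T *m Q = 1%:M ->
  let M := \matrix_(i, j) match f i, f j with
    | Some a, Some b => Q a b | None, None => (i == j)%:R | _, _ => 0 end in
  M^T *m M = 1%:M.
Proof.
move=> hQ M; apply/matrixP => i j; rewrite !mxE.
under eq_bigr do rewrite !mxE.
case Ei: (f i) => [a|]; case Ej: (f j) => [b|].
- transitivity (\sum_l (match f l with Some c => Q c a * Q c b | None => 0 end)).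
    by apply: eq_bigr => l _; case: (f l) => [c|] /=; rewrite ?mul0r.
  rewrite (@sum_opt N m f g hfg hgf (fun c => Q c a * Q c b)).
  rewrite (hgf _ _ Ei) (hgf _ _ Ej).
  have ginj : injective g.
    by move=> x y hxy; have := hfg x; rewrite hxy hfg => -[].
  rewrite (inj_eq ginj).
  have := congr1 (fun X : 'M[R]_m => X a b) hQ; rewrite !mxE => <-.
  by apply: eq_bigr => c _; rewrite mxE.
- rewrite big1 //; last by move=> l _; case: (f l) => [c|] /=; rewrite ?mulr0 ?mul0r.
  by case: eqP => // E; rewrite E Ej in Ei.
- rewrite big1 //; last by move=> l _; case: (f l) => [c|] /=; rewrite ?mulr0 ?mul0r.
  by case: eqP => // E; rewrite E Ej in Ei.
- rewrite (bigD1 i) //= Ei eqxx mul1r big1 ?addr0 //.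
  by move=> l hl; case: (f l) => [c|] /=; rewrite ?mul0r // (negbTE hl) mul0r.
Qed.
End Gen.
Section S.
Variables (n d k0 : nat) (hk : (k0 < n)%N).

Definition gQ (c : 'I_(1 + d)) : 'I_(n + d).
refine (@Ordinal _ (if (c : nat) == 0%N then k0 else (n + c.-1)%N) _).
case: c => [[|c] hc] /=.
  by apply: leq_trans hk (leq_addr _ _).
by rewrite ltn_add2l.
Defined.

Lemma gQ_val c : (gQ c : nat) = if (c : nat) == 0%N then k0 else (n + c.-1)%N.
Proof. by []. Qed.

Lemma hfgQ c : Qpos n d k0 (gQ c) = Some c.
Proof.
rewrite /Qpos gQ_val; case: c => [[|c] hc] /=.
  by rewrite eqxx; congr Some; apply: val_inj; rewrite /= inordK.
have -> : (n + c == k0)%N = false.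
  by apply/negbTE; rewrite neq_ltn (leq_trans hk (leq_addr _ _)) orbT.
rewrite leq_addr; congr Some; apply: val_inj; rewrite /= addKn inordK //.
Qed.

Lemma hgfQ (l : 'I_(n + d)) c : Qpos n d k0 l = Some c -> l = gQ c.
Proof.
rewrite /Qpos; case: eqP => [hl|_].
  move=> [<-]; apply: val_inj; rewrite /= inordK /=; done.
case: leqP => // hnl [<-]; apply: val_inj; rewrite /= inordK.
  by rewrite /= subnKC.
by rewrite ltnS ltn_subLR.
Qed.
End S.

Section Main.
Variables (R : realFieldType) (n d : nat) (Qt : nat -> 'M[R]_(1 + d)).

Lemma Qbig_orth k0 : (k0 < n)%N -> orthogonal_mx (Qt k0) ->
  (Qbig n d k0 (Qt k0))^T *m Qbig n d k0 (Qt k0) = 1%:M.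
Proof.
move=> hk hQ.
have H := (@orth_gen R (n + d) (1 + d) (fun i : 'I_(n + d) => Qpos n d k0 i)
          (@gQ n d k0 hk) (@hfgQ n d k0 hk) (@hgfQ n d k0 hk) (Qt k0) hQ).
rewrite /= in H; rewrite /Qbig; exact H.
Qed.

Definition stepQ (M : 'M[R]_(n + d, n)) k0 := Qbig n d k0 (Qt k0) *m M.

Lemma fold_orth k m (M : 'M[R]_(n + d, n)) :
  (forall k0, (k0 < n)%N -> orthogonal_mx (Qt k0)) ->
  (k + m <= n)%N -> M^T *m M = 1%:M ->
  (foldl stepQ M (iota k m))^T *m foldl stepQ M (iota k m) = 1%:M.
Proof.
move=> hQ; elim: m k M => [|m IH] k M //= hkm hM.
apply: IH; first by rewrite addSnnS.
have hk : (k < n)%N by apply: leq_trans hkm; rewrite -addn1 leq_add2l.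
by rewrite /stepQ trmx_mul mulmxA -(mulmxA M^T) Qbig_orth ?mulmx1 //; apply: hQ.
Qed.

Lemma Qbig_row k0 (r : 'I_(n + d)) l : Qpos n d k0 r = None ->
  Qbig n d k0 (Qt k0) r l = (r == l)%:R.
Proof.
move=> hr; rewrite mxE hr; case E: (Qpos n d k0 l) => //.
by case: eqP => // h; rewrite h E in hr.
Qed.

Lemma Qbig_col k0 r (l : 'I_(n + d)) : Qpos n d k0 l = None ->
  Qbig n d k0 (Qt k0) r l = (r == l)%:R.
Proof.
move=> hl; rewrite mxE hl; case E: (Qpos n d k0 r) => //.
by case: eqP => // h; rewrite -h E in hl.
Qed.

Definition Inv k (M : 'M[R]_(n + d, n)) :=
  (forall (r : 'I_(n + d)) (j : 'I_n), (r < j)%N -> M r j = 0) /\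
  (forall (r : 'I_(n + d)) (j : 'I_n), (k <= j)%N -> M r j = (r == widen_ord (leq_addr d n) j)%:R).

Lemma fold_inv k m (M : 'M[R]_(n + d, n)) :
  (k + m <= n)%N -> Inv k M -> Inv (k + m) (foldl stepQ M (iota k m)).
Proof.
elim: m k M => [|m IH] k M /=; first by rewrite addn0.
move=> hkm [h1 h2]; rewrite -addSnnS; apply: IH; first by rewrite addSnnS.
have hk : (k < n)%N by apply: leq_trans hkm; rewrite -addn1 leq_add2l.
have colN (j : 'I_n) : (k < j)%N -> Qpos n d k (widen_ord (leq_addr d n) j) = None.
  move=> hj; rewrite /Qpos /= eq_sym (ltn_eqF hj).
  by rewrite leqNgt ltn_ord.
have colE (r : 'I_(n + d)) (j : 'I_n) : (k < j)%N -> stepQ M k r j = (r == widen_ord (leq_addr d n) j)%:R.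
  move=> hj; rewrite /stepQ mxE (bigD1 (widen_ord (leq_addr d n) j)) //=.
  rewrite h2 ?eqxx ?mulr1; last exact: ltnW.
  rewrite Qbig_col ?colN // big1 ?addr0 // => l hl.
  rewrite h2 ?(negbTE hl) ?mulr0 //; exact: ltnW.
split=> r j hrj.
  case: (ltnP k j) => hkj.
    by rewrite colE // (_ : (r == _) = false) //; apply/negbTE; rewrite -val_eqE /= neq_ltn hrj.
  have hr : Qpos n d k r = None.
    by rewrite /Qpos (ltn_eqF (leq_trans hrj hkj)) leqNgt (leq_trans hrj (leq_trans hkj (ltnW hk))).
  rewrite /stepQ mxE (bigD1 r) //= Qbig_row // eqxx mul1r h1 // big1 ?addr0 // => l hl.
  by rewrite Qbig_row // eq_sym (negbTE hl) mul0r.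
by apply: colE.
Qed.

End Main.

Lemma inv_base (R : realFieldType) n d : @Inv R n d 0 (col_mx (1%:M : 'M[R]_n) (0 : 'M[R]_(d, n))).
Proof.
suff h2 : forall (r : 'I_(n + d)) (j : 'I_n),
  (col_mx (1%:M : 'M[R]_n) (0 : 'M[R]_(d, n))) r j = (r == widen_ord (leq_addr d n) j)%:R.
  split=> r j; last by rewrite h2.
  by move=> hrj; rewrite h2 (_ : (r == _) = false) //; apply/negbTE; rewrite -val_eqE /= neq_ltn hrj.
move=> r j; rewrite mxE; case: splitP => [r' hr | r' hr]; rewrite mxE.
  by rewrite -!val_eqE /= hr.
have -> : (r == widen_ord (leq_addr d n) j) = false.
  apply/negP; rewrite -val_eqE /= hr => /eqP h.
  by move: (ltn_ord j); rewrite -h ltnNge leq_addr.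
by [].
Qed.

Lemma cast_orth (R : realFieldType) p q n (e : p = q) (S : 'M[R]_(p, n)) :
  (castmx (e, erefl n) S)^T *m castmx (e, erefl n) S = S^T *m S.
Proof. by case: q / e. Qed.

Theorem corollary6p3 (R : realFieldType) (n d : nat)
  (hd : (1 <= d)%N) (hdn : (d <= n)%N)
  (Qt : nat -> 'M[R]_(1 + d))
  (hQt : forall k0 : nat, (k0 < n)%N -> orthogonal_mx (Qt k0)) :
  OTSON (Amat n d Qt) (Cmat n d Qt).
Proof.
have hS : col_mx (Cmat n d Qt) (Amat n d Qt) = stackQ' n d Qt by rewrite vsubmxK.
split.
  apply/eqP; rewrite eq_sym subr_eq addrC; apply/eqP.
  rewrite -mul_row_col -tr_col_mx hS /stackQ' cast_orth /stackQ.
  have hb : (col_mx (1%:M : 'M[R]_n) (0 : 'M[R]_(d, n)))^T *m col_mx 1%:M 0 = 1%:M.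
    by rewrite tr_col_mx mul_row_col tr_scalar_mx mul1mx trmx0 mul0mx addr0.
  exact: esym (@fold_orth R n d Qt 0 n _ hQt (leqnn n) hb).
move=> i j hij; rewrite hS /stackQ' castmxE /=.
have [h1 _] := @fold_inv R n d Qt 0 n _ (leqnn _) (inv_base R n d).
by apply: h1.
Qed.
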